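(* $\mathcal{M}_7=\{1,2,6,7,14,294,12642\}$ and $\mathcal{M}_{43}=\{1,2,6,42,43,86,258,77658\}$.
   Context: For positive integers $k,n$ let $S_k(n)=\sum_{i=1}^{n} i^k$. For an integer $a$, $\mathcal{M}_a$ denotes the set of positive integers $n$ such that $S_n(n)\equiv a\pmod{n}$. *)

(* Defs.v *)
From mathcomp Require Import all_boot.
Set Implicit Arguments. Unset Strict Implicit. Unset Printing Implicit Defensive.

Definition S (k n : nat) : nat := \sum_(1 <= i < n.+1) i ^ k.

Definition inM (a n : nat) : Prop := 0 < n /\ S n n = a %[mod n].

(* Main.v *)
Require Import Defs.
From mathcomp Require Import all_boot all_algebra all_field zify.
From Stdlib Require Import NArith Lia.
Import GRing.Theory.
Set Implicit Arguments. Unset Strict Implicit. Unset Printing Implicit Defensive.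

Lemma modnN a m : a %% m = PeanoNat.Nat.modulo a m.
Proof. case: m => [|m]. by rewrite modn0.
apply: (PeanoNat.Nat.mod_unique _ _ (a %/ m.+1)). apply/ltP; exact: ltn_pmod.
 by rewrite {1}(divn_eq a m.+1) mulnC. Qed.
Lemma expnN a m : a ^ m = PeanoNat.Nat.pow a m.
Proof. elim: m => [|m IH]; first by []. by rewrite expnS IH /= -mulnE. Qed.

Fixpoint pm (b m : N) (p : positive) : N :=
  match p with
  | xH => (b mod m)%N
  | xO p => let r := pm b m p in ((r * r) mod m)%N
  | xI p => let r := pm b m p in ((((r * r) mod m) * b) mod m)%N
  end.
Lemma pm_ok b m p : m <> 0%N -> pm b m p = ((b ^ N.pos p) mod m)%N.
Proof.
move=> m0; elim: p => [p IH|p IH|]; cbn [pm].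
- rewrite IH.
  have -> : (N.pos p~1 = N.pos p + N.pos p + 1)%N by lia.
  rewrite !N.pow_add_r N.pow_1_r -N.Div0.mul_mod N.Div0.mul_mod_idemp_l //.
- rewrite IH.
  have -> : (N.pos p~0 = N.pos p + N.pos p)%N by lia.
  by rewrite !N.pow_add_r -N.Div0.mul_mod.
- by rewrite N.pow_1_r.
Qed.

Definition pw (i e m : N) : N :=
  match e with N0 => (1 mod m)%N | Npos p => pm i m p end.
Lemma pw_ok i e m : m <> 0%N -> pw i e m = ((i ^ e) mod m)%N.
Proof. by move=> m0; case: e => [|p] //=; rewrite pm_ok. Qed.

Fixpoint loop (k : nat) (i acc e m : N) : N :=
  match k with O => acc | k.+1 => loop k (N.succ i) ((acc + pw i e m) mod m)%N e m end.

Lemma loop_ok e m k : 0 < m -> forall j acc, acc < m ->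
  N.to_nat (loop k (N.of_nat j) (N.of_nat acc) (N.of_nat e) (N.of_nat m))
  = (acc + \sum_(j <= i < j + k) i ^ e) %% m.
Proof.
move=> m0; elim: k => [|k IH] j acc accm.
  by rewrite addn0 big_geq // addn0 Nat2N.id modn_small.
have mN : N.of_nat m <> 0%N by lia.
cbn [loop].
have -> : ((N.of_nat acc + pw (N.of_nat j) (N.of_nat e) (N.of_nat m)) mod N.of_nat m)%N
  = N.of_nat ((acc + j ^ e %% m) %% m).
  apply: N2Nat.inj; rewrite N2Nat.inj_mod N2Nat.inj_add pw_ok // N2Nat.inj_mod N2Nat.inj_pow.
  by rewrite !Nat2N.id -!modnN expnN.
rewrite -Nat2N.inj_succ IH; last exact: ltn_pmod.
have -> : j + k.+1 = j.+1 + k by rewrite addnS addSn.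
rewrite [in RHS]big_ltn; last by lia.
rewrite modnDml addnA [acc + j ^ e %% m]addnC [acc + j ^ e]addnC -!addnA.
by rewrite modnDml.
Qed.

Definition Sf (e m : nat) : N :=
  loop m (N.of_nat 1) (N.of_nat 0) (N.of_nat e) (N.of_nat m).
Lemma Sf_ok e m : 0 < m -> N.to_nat (Sf e m) = S e m %% m.
Proof. by move=> m0; rewrite /Sf loop_ok // add0n add1n. Qed.

Lemma per_mul k t e : S e (k * t) = t * S e k %[mod k].
Proof.
elim: t => [|t IH]; first by rewrite muln0 /S big_geq.
have B : \sum_((k*t).+1 <= i < (k + k*t).+1) i ^ e = S e k %[mod k].
  rewrite -[(k*t).+1]add1n -[(k + k*t).+1]addSn big_addn addnK -modn_summ /S.
  rewrite -[in RHS]modn_summ; congr (_ %% _); apply: eq_bigr => i _.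
  by rewrite -[in LHS]modnXm [i + _]addnC [k * t]mulnC modnMDl modnXm.
rewrite /S mulnS (big_cat_nat _ (n:=(k*t).+1)) //=; last by rewrite ltnS leq_addl.
by rewrite -modnDm IH B modnDm mulSn addnC.
Qed.

Lemma congS n m : m %| n -> S n n = n %/ m * S n m %[mod m].
Proof.
move=> H; have E : n = m * (n %/ m) by rewrite mulnC divnK.
by rewrite {2}E per_mul.
Qed.

Section PS.
Variable q : nat.
Hypothesis qp : prime q.
Local Notation F := 'F_q.

Lemma sumF e : 0 < e -> ((S e q)%:R : F)%R = (\sum_(x : F) x ^+ e)%R.
Proof.
move=> e0; rewrite /S natr_sum big_nat_recr ?prime_gt0 //=.
rewrite natrX (pchar_Fp_0 qp) expr0n eqn0Ngt e0 /= addr0.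
have -> : (\sum_(1 <= i < q) ((i ^ e)%:R : F) = \sum_(0 <= i < q) (i%:R : F) ^+ e)%R.
  rewrite [in RHS]big_ltn ?prime_gt0 // expr0n eqn0Ngt e0 /= add0r.
  by apply: eq_bigr => i _; rewrite natrX.
transitivity (\sum_(0 <= i < (Zp_trunc (pdiv q)).+2) (i%:R : F) ^+ e)%R.
  by rewrite [X in _ = (\sum_(0 <= i < X) _)%R]Fp_cast.
by rewrite big_mkord; apply: eq_bigr => i _; rewrite natr_Zp.
Qed.

Lemma fermatF (c : F) : c != 0%R -> (c ^+ q.-1 = 1)%R.
Proof.
move=> cz; apply: (mulfI cz); rewrite mulr1 -exprS prednK ?prime_gt0 //.
by have := expf_card c; rewrite (card_Fp qp).
Qed.

Lemma PS0 e : 0 < e -> ~~ (q.-1 %| e) -> q %| S e q.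
Proof.
move=> e0 nd; rewrite (dvdn_pcharf (pchar_Fp qp)) sumF //.
set s := (\sum_(x : F) x ^+ e)%R.
apply/negPn/negP => sz.
have Hs : forall c : F, c != 0%R -> (c ^+ e = 1)%R.
  move=> c cz; apply: (mulIf sz); rewrite mul1r /s mulr_sumr.
  rewrite [in RHS](reindex_inj (mulfI cz)) /=.
  by apply: eq_bigr => x _; rewrite exprMn.
set r := e %% q.-1.
have q1 : 0 < q.-1 by rewrite -ltnS prednK ?prime_gt0 ?prime_gt1.
have r0 : 0 < r by rewrite lt0n.
have Hr : forall c : F, c != 0%R -> (c ^+ r = 1)%R.
  move=> c cz; rewrite -(Hs c cz) [in RHS](divn_eq e q.-1) exprD mulnC exprM.
  by rewrite fermatF // expr1n mul1r.
have pz : ('X^r - 1 : {poly F})%R != 0%R.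
  by rewrite -size_poly_eq0 size_XnsubC.
have := max_poly_roots pz (rs := enum (predC1 (0%R : F))).
rewrite enum_uniq size_XnsubC // -cardE cardC1 card_Fp // ltnS.
have -> : all (root ('X^r - 1)%R) (enum (predC1 (0%R : F))).
  apply/allP => c; rewrite mem_enum /= => cz.
  by rewrite rootE !hornerE Hr // subrr.
move=> /(_ isT isT); rewrite leqNgt ltn_pmod //.
Qed.

Lemma PS1 e : q.-1 %| e -> 0 < e -> q %| S e q + 1.
Proof.
move=> de e0; rewrite (dvdn_pcharf (pchar_Fp qp)) natrD sumF //.
rewrite (bigD1 0%R) //= expr0n eqn0Ngt e0 /= add0r.
have -> : (\sum_(x : F | x != 0%R) x ^+ e = \sum_(x : F | x != 0%R) 1)%R.
  apply: eq_bigr => x xz; case/dvdnP: de => k ->.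
  by rewrite mulnC exprM fermatF // expr1n.
rewrite sumr_const -natrD.
have -> : #|[pred x : F | x != 0%R]| = #|predC1 (0%R : F)| by [].
by rewrite cardC1 card_Fp // addn1 prednK ?prime_gt0 // pchar_Fp_0.
Qed.
End PS.

Section Main.
Variables (a n : nat).
Hypotheses (ap : prime a) (n0 : 0 < n) (HS : S n n = a %[mod n]).

Lemma cong m : m %| n -> a = n %/ m * S n m %[mod m].
Proof. by move=> H; rewrite -(modn_dvdm _ H) -HS (modn_dvdm _ H) congS. Qed.

Lemma dvd_a q : prime q -> q %| a -> q = a.
Proof. by move=> qp; rewrite dvdn_prime2 // => /eqP. Qed.

Lemma F1 q : prime q -> q ^ 2 %| n -> q = a.
Proof.
move=> qp /dvdnP [k Hk].
have qn : q %| n by rewrite Hk expnS mulnCA dvdn_mulr.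
have qd : q %| n %/ q by rewrite Hk expnS expn1 mulnCA mulKn ?prime_gt0 // dvdn_mull.
apply: dvd_a => //; by rewrite /dvdn (cong qn) -modnMml (eqP qd) mul0n mod0n.
Qed.

Lemma F2 : ~~ (a ^ 3 %| n).
Proof.
apply/negP => /dvdnP [k Hk].
have a1 := prime_gt1 ap; have a0 := prime_gt0 ap.
have an : a ^ 2 %| n by rewrite Hk dvdn_mull // (expnS a 2) dvdn_mull.
have ad : a %| n %/ a ^ 2.
  by rewrite Hk (expnS a 2) mulnA mulnK ?expn_gt0 ?a0 // dvdn_mull.
have aS : a %| S n (a ^ 2).
  by rewrite /dvdn (expnS a 1) expn1 per_mul -modnMml modnn mul0n mod0n.
have D : a ^ 2 %| n %/ a ^ 2 * S n (a ^ 2) by rewrite (expnS a 1) expn1 dvdn_mul.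
have H : a %% a ^ 2 = 0 by rewrite (cong an); exact/eqP.
have : a ^ 2 %| a by rewrite /dvdn H.
move/dvdn_leq => /(_ a0); rewrite (expnS a 1) expn1 leqNgt ltn_Pmulr //.
Qed.

Lemma F3 q : prime q -> q %| n -> q != a -> q.-1 %| n.
Proof.
move=> qp qn qa; apply/negPn/negP => nd.
have := PS0 qp n0 nd; rewrite /dvdn => /eqP H.
apply: (negP qa); apply/eqP; apply: (dvd_a qp).
by rewrite /dvdn (cong qn) -modnMmr H muln0 mod0n.
Qed.

Definition bd p := if p == a then 2 else 1.

Lemma logb p : prime p -> logn p n <= bd p.
Proof.
move=> pp; rewrite /bd; case: eqP => [->|pa].
  by rewrite leqNgt -(@pfactor_dvdn a 3 n ap n0); apply: F2.
rewrite leqNgt -(@pfactor_dvdn p 2 n pp n0); apply/negP => H.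
by apply: pa; apply: F1.
Qed.

Lemma L (A : seq nat) B d : 0 < d -> d %| n -> (forall p, prime p -> p %| d -> p \in A) ->
  all (fun p => p ^ bd p %| B) A -> d %| B.
Proof.
move=> d0 dn HA HB; apply/dvdn_partP => // p; rewrite mem_primes => /and3P [pp _ pd].
rewrite p_part; apply: dvdn_trans (allP HB p (HA p pp pd)).
apply: dvdn_exp2l; apply: leq_trans (logb pp); exact: dvdn_leq_log.
Qed.

Lemma clos (A : seq nat) B : 0 < B -> a \in A -> all (fun p => p ^ bd p %| B) A ->
  all (fun d => prime d.+1 ==> (d.+1 \in A)) (divisors B) ->
  forall q, prime q -> q %| n -> q \in A.
Proof.
move=> B0 aA HB HD q; elim/ltn_ind: q => q IH qp qn.
case: (eqVneq q a) => [->//|qa].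
have qd := F3 qp qn qa.
have q1 : 0 < q.-1 by rewrite -ltnS prednK ?prime_gt0 ?prime_gt1.
have : q.-1 %| B.
  apply: (L q1 qd _ HB) => p pp pd; apply: IH => //; last exact: dvdn_trans pd qd.
  by apply: leq_ltn_trans (dvdn_leq q1 pd) _; rewrite prednK ?prime_gt0.
rewrite dvdn_divisors // => /(allP HD); rewrite prednK ?prime_gt0 // qp.
by [].
Qed.
End Main.

Lemma eqmod_parts d x y : 0 < d ->
  (x == y %[mod d]) = all (fun p => x == y %[mod p ^ logn p d]) (primes d).
Proof.
move=> d0; apply/idP/allP => [/eqP H p pd | H].
  by apply/eqP; rewrite -(modn_dvdm x (pfactor_dvdnn p d)) H modn_dvdm // pfactor_dvdnn.
wlog yx : x y H / y <= x.
  move=> W; case/orP: (leq_total y x) => le; first exact: W.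
  rewrite eq_sym; apply: W => // p pd; rewrite eq_sym; exact: H.
rewrite eqn_mod_dvd //; apply/dvdn_partP => // p pd; rewrite p_part -eqn_mod_dvd //.
exact: H.
Qed.

Definition good a d m := (d %/ m * N.to_nat (Sf d m)) %% m == a %% m.

Lemma good_ok a d m : 0 < m -> m %| d -> good a d m = (S d d == a %[mod m]).
Proof. by move=> m0 md; rewrite /good Sf_ok // modnMmr (congS md). Qed.

Lemma dec a d : 0 < d ->
  (S d d == a %[mod d]) = all (fun p => good a d (p ^ logn p d)) (primes d).
Proof.
move=> d0; rewrite eqmod_parts //; apply: eq_in_all => p.
rewrite mem_primes => /and3P [pp _ _].
by rewrite good_ok // ?expn_gt0 ?prime_gt0 // pfactor_dvdnn.
Qed.

Definition L7 := [:: 1; 2; 6; 7; 14; 294; 12642].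
Definition L43 := [:: 1; 2; 6; 42; 43; 86; 258; 77658].

Lemma C7 : all (fun d => all (fun p => good 7 d (p ^ logn p d)) (primes d) == (d \in L7))
  (divisors 12642).
Proof. vm_compute. reflexivity. Qed.
Lemma C43 : all (fun d => all (fun p => good 43 d (p ^ logn p d)) (primes d) == (d \in L43))
  (divisors 77658).
Proof. vm_compute. reflexivity. Qed.


Lemma part7 n : inM 7 n <-> n \in L7.
Proof.
have p7 : prime 7 by vm_compute.
have HB : all (fun p => p ^ bd 7 p %| 12642) [:: 2; 3; 7; 43] by vm_compute.
have B0 : 0 < 12642 by vm_compute.
split.
- case=> n0 HS.
  have HD : all (fun d => prime d.+1 ==> (d.+1 \in [:: 2; 3; 7; 43])) (divisors 12642).
    by vm_compute.
  have cl := @clos 7 n p7 n0 HS [:: 2; 3; 7; 43] 12642 B0 (ltac:(by vm_compute)) HB HD.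
  have nB := @L 7 n p7 n0 HS [:: 2; 3; 7; 43] 12642 n n0 (dvdnn n) cl HB.
  move: nB; rewrite (dvdn_divisors _ B0) => /(allP C7).
  rewrite -(dec _ n0) HS eqxx => /eqP <-.
  exact: isT.
- move=> nL.
  have nB : n \in divisors 12642.
    by move: n nL; apply/allP; vm_compute.
  have n0 : 0 < n by move: n nL {nB}; apply/allP; vm_compute.
  split; first exact: n0.
  apply/eqP; rewrite (dec _ n0).
  by move: (allP C7 n nB) => /eqP ->.
Qed.

Lemma inA p : p \in [:: 2; 3; 7; 43; 77659] -> p != 77659 -> p \in [:: 2; 3; 7; 43].
Proof. move=> H np; move: H; rewrite !inE (negbTE np) orbF; exact. Qed.

Lemma modlin a d f : (a * d + 1) %% f = ((a %% f) * (d %% f) + 1) %% f.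
Proof. by rewrite -modnDml -modnMm modnDml. Qed.

Lemma notprime_factor q f : prime q -> f %| q -> 1 < f -> f < q -> False.
Proof.
move=> qp fq f1 fq'; case/primeP: qp => _ /(_ f fq) /orP [/eqP E|/eqP E].
  by rewrite E in f1.
by rewrite E ltnn in fq'.
Qed.

Section P43.
Variable n : nat.
Hypotheses (n0 : 0 < n) (HS : S n n = 43 %[mod n]).
Let ap : prime 43 := ltac:(by vm_compute).
Let p77 : prime 77659 := ltac:(by vm_compute).
Let HB : all (fun p => p ^ bd 43 p %| 77658) [:: 2; 3; 7; 43] := ltac:(by vm_compute).
Let B0 : 0 < 77658 := ltac:(by vm_compute).

Lemma no77sq d : d %| n -> 77659 * 77659 %| d -> False.
Proof.
move=> dn H.
have : 77659 ^ 2 %| n by rewrite (expnS 77659 1) expn1; exact: dvdn_trans H dn.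
rewrite (pfactor_dvdn _ p77 n0) => H2.
have := leq_trans H2 (logb ap n0 HS p77).
by rewrite /bd; vm_compute.
Qed.

Lemma clos43 q : prime q -> q %| n -> q \in [:: 2; 3; 7; 43; 77659].
Proof.
elim/ltn_ind: q => q IH qp qn.
case: (eqVneq q 43) => [->|qa]; first by vm_compute.
have qd := F3 ap n0 HS qp qn qa.
have q2 := prime_gt1 qp.
have q1 : 0 < q.-1 by lia.
have IH' : forall p, prime p -> p %| q.-1 -> p \in [:: 2; 3; 7; 43; 77659].
  move=> p pp pd; apply: (IH p _ pp (dvdn_trans pd qd)).
  apply: leq_ltn_trans (dvdn_leq q1 pd) _; lia.
case: (boolP (77659 %| q.-1)) => H77.
- have Hd : q.-1 = q.-1 %/ 77659 * 77659 by rewrite divnK.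
  set d := q.-1 %/ 77659 in Hd.
  have d0 : 0 < d by move: q1; rewrite Hd muln_gt0 => /andP [].
  have dq : d %| q.-1 by rewrite Hd dvdn_mulr.
  have dn : d %| n := dvdn_trans dq qd.
  have dB : d %| 77658.
    apply: (@L 43 n ap n0 HS [:: 2; 3; 7; 43] 77658 d d0 dn _ HB) => p pp pd.
    apply: inA; first exact: IH' pp (dvdn_trans pd dq).
    apply/eqP => E; rewrite E in pd.
    apply: (no77sq qd); rewrite Hd mulnC; exact: dvdn_mul.
  have Hc : all (fun d => has (fun f => (1 < f) && (f <= 43) &&
      (((77659 %% f) * (d %% f) + 1) %% f == 0)) [:: 2; 3; 5; 7; 13; 43]) (divisors 77658).
    by vm_compute.
  move: (allP Hc d); rewrite -(dvdn_divisors _ B0) => /(_ dB) /hasP [f _ /andP [/andP [f1 f2] /eqP fd]].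
  have Hq : q = 77659 * d + 1 by rewrite mulnC -Hd addn1 (prednK (prime_gt0 qp)).
  have fq : f %| q by rewrite Hq /dvdn modlin fd.
  have h : 43 < 77659 by vm_compute.
  have h2 : 77659 <= 77659 * d := leq_pmulr 77659 d0.
  exfalso; apply: (notprime_factor qp fq f1); rewrite Hq addn1 ltnS.
  exact: leq_trans f2 (leq_trans (ltnW h) h2).
- have qB : q.-1 %| 77658.
    apply: (@L 43 n ap n0 HS [:: 2; 3; 7; 43] 77658 q.-1 q1 qd _ HB) => p pp pd.
    apply: inA; first exact: IH' pp pd.
    by apply/eqP => E; rewrite E in pd; rewrite pd in H77.
  have HD : all (fun d => prime d.+1 ==> (d.+1 \in [:: 2; 3; 7; 43; 77659])) (divisors 77658).
    by vm_compute.
  move: (allP HD q.-1); rewrite -(dvdn_divisors _ B0) => /(_ qB).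
  by rewrite (prednK (prime_gt0 qp)) qp.
Qed.

Lemma n77 : n %| 77658.
Proof.
have cl := clos43.
case: (boolP (77659 %| n)) => H.
- exfalso.
  have Hn : n = n %/ 77659 * 77659 by rewrite divnK.
  set m := n %/ 77659 in Hn.
  have m0 : 0 < m by move: n0; rewrite Hn muln_gt0 => /andP [].
  have mn : m %| n by rewrite Hn dvdn_mulr.
  have mB : m %| 77658.
    apply: (@L 43 n ap n0 HS [:: 2; 3; 7; 43] 77658 m m0 mn _ HB) => p pp pd.
    apply: inA; first exact: cl p pp (dvdn_trans pd mn).
    apply/eqP => E; rewrite E in pd.
    apply: (no77sq (dvdnn n)); rewrite Hn mulnC; exact: dvdn_mul (dvdnn _) pd.
  have q43 : 77659 != 43 by vm_compute.
  have qd := F3 ap n0 HS p77 H q43.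
  have P1 := PS1 p77 qd n0.
  have cg := cong HS H.
  have D' : 77659 %| m * (S n 77659 + 1) := dvdn_mull m P1.
  have E : (43 + m) %% 77659 = (m * (S n 77659 + 1)) %% 77659.
    by rewrite mulnDr muln1 -modnDml cg modnDml.
  have D : 77659 %| 43 + m by rewrite /dvdn E; exact: D'.
  have Hc : all (fun m => ~~ (77659 %| 43 + m)) (divisors 77658) by vm_compute.
  move: (allP Hc m); rewrite -(dvdn_divisors _ B0) => /(_ mB).
  by rewrite D.
- apply: (@L 43 n ap n0 HS [:: 2; 3; 7; 43] 77658 n n0 (dvdnn n) _ HB) => p pp pd.
  apply: inA; first exact: cl p pp pd.
  by apply/eqP => E; rewrite E in pd; rewrite pd in H.
Qed.
End P43.

Lemma part43 n : inM 43 n <-> n \in L43.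
Proof.
have B0 : 0 < 77658 by vm_compute.
split.
- case=> n0 HS.
  move: (n77 n0 HS); rewrite (dvdn_divisors _ B0) => /(allP C43).
  rewrite -(dec _ n0) HS eqxx => /eqP <-.
  exact: isT.
- move=> nL.
  have nB : n \in divisors 77658.
    by move: n nL; apply/allP; vm_compute.
  have n0 : 0 < n by move: n nL {nB}; apply/allP; vm_compute.
  split; first exact: n0.
  apply/eqP; rewrite (dec _ n0).
  by move: (allP C43 n nB) => /eqP ->.
Qed.

Theorem mainTheorem9 :
  (forall n : nat, inM 7 n <-> n \in [:: 1; 2; 6; 7; 14; 294; 12642]) /\
  (forall n : nat, inM 43 n <-> n \in [:: 1; 2; 6; 42; 43; 86; 258; 77658]).
Proof. exact: (conj part7 part43). Qed.
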